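(* Let $a,b$ be positive integers and $c$ an integer with $-b<c<a$, such that $\gcd(a,b,c)=1$ and each of $\gcd(a,b)$, $\gcd(a,c)$, $\gcd(b,c)$ differs from $1$. Let $d=\gcd(a,b)$ and $k\in\mathbb{N}\cup\{\infty\}$ with $k\ge d-1$. If $(a,b)$ is of case $(1')$, $(2')$ or $(3')$, then the $\mathbb{Z}$-grading $E_{(-b,c,a)}^{(\infty,k,\infty)}$ is $d$-central.
   Context: $E$ is the Grassmann algebra (over a field of characteristic zero) of an infinite-dimensional vector space with basis $e_1,e_2,\dots$; its basis consists of $1$ and the monomials $e_{i_1}\cdots e_{i_k}$, $i_1<\dots<i_k$, of length $k$ and support $\{e_{i_1},\dots,e_{i_k}\}$. For pairwise distinct integers $r_j$ and $v_j\in\mathbb{N}\cup\{\infty\}$, $E_{(r_1,\dots,r_n)}^{(v_1,\dots,v_n)}=\bigoplus_rA_r$ is the $\mathbb{Z}$-grading obtained by splitting $\{e_i\}$ into $n$ disjoint sets of cardinalities $v_1,\dots,v_n$, giving elements of the $j$-th set degree $r_j$, monomials the sum of degrees. It is $d$-central if each $e_i$ is homogeneous, $A_r\neq0$ for all $r\in\mathbb{Z}$, and for each $h\in d\mathbb{Z}$, $A_h$ contains infinitely many monomials of even length with pairwise disjoint supports. Cases: for positive $a,b$ with $d=\gcd(a,b)$ there exist $\alpha,\beta,\alpha',\beta'\in\mathbb{N}_0$ with $d=\alpha a-\beta b$ and $-d=\alpha'a-\beta'b$; choose $(\alpha,\beta)$ with $\alpha+\beta$ least possible and $(\alpha',\beta')$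 with $\alpha'+\beta'$ least possible. Case $(1')$: $\alpha+\beta$ and $\alpha'+\beta'$ both even; $(2')$: $\alpha+\beta$ even, $\alpha'+\beta'$ odd; $(3')$: $\alpha+\beta$ odd, $\alpha'+\beta'$ even; $(4')$: both odd. *)

(* Defs.v *)
From mathcomp Require Import all_boot all_order all_algebra.
Set Implicit Arguments. Unset Strict Implicit. Unset Printing Implicit Defensive.
Import Order.TTheory GRing.Theory Num.Theory.
Local Open Scope ring_scope.

(* Extended naturals N ∪ {∞}: [None] is ∞. *)
Definition natinf := option nat.

Definition has_card (P : pred nat) (k : natinf) : Prop :=
  match k with
  | Some n => exists s : seq nat, [/\ uniq s, size s = n & forall x, P x = (x \in s)]
  | None => forall N : nat, exists x : nat, (N <= x)%N /\ P x
  end.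

Definition natinf_ge (k : natinf) (m : nat) : Prop :=
  match k with Some n => (m <= n)%N | None => True end.

(* Generators e_1, e_2, ... are indexed by nat (0-based).
   A monomial e_{i1}...e_{ik}, i1<...<ik, is represented by its strictly
   increasing list of indices (its support); its length is [size s]. *)
Definition monomial (s : seq nat) : bool := sorted ltn s.

Definition mdeg (deg : nat -> int) (s : seq nat) : int := \sum_(i <- s) deg i.

Definition disjoint_supp (s t : seq nat) : bool := all (fun x => x \notin t) s.

(* d-centrality of the Z-grading of E in which each generator e_i is
   homogeneous of degree [deg i] (homogeneity of the e_i thus holds by
   construction).  A_r is spanned by the monomials of degree r, so
   A_r <> 0 iff some monomial has degree r. *)
Definition d_central (d : nat) (deg : nat -> int) : Prop :=
  (forall r : int, exists s, monomial s /\ mdeg deg s = r) /\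
  (forall h : int, (d%:Z %| h)%Z ->
     exists f : nat -> seq nat,
       (forall n, [/\ monomial (f n), ~~ odd (size (f n)) & mdeg deg (f n) = h]) /\
       (forall m n, m <> n -> f m <> f n /\ disjoint_supp (f m) (f n))).

(* [deg] realizes the grading E_{(r_1,...,r_n)}^{(v_1,...,v_n)}: the generators
   are split into the disjoint sets deg^{-1}(r_j) of cardinality v_j,
   covering all generators. *)
Definition realizes_grading (deg : nat -> int) (rs : seq int) (vs : seq natinf) : Prop :=
  uniq rs /\ size rs = size vs /\
  (forall i, deg i \in rs) /\
  (forall j, (j < size rs)%N -> has_card (fun i => deg i == nth 0 rs j) (nth None vs j)).

Definition minsum_parity (a b : nat) (t : int) (p : bool) : Prop :=
  exists alpha beta : nat,
    [/\ (alpha%:Z * a%:Z - beta%:Z * b%:Z = t),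
        (forall al' be' : nat, al'%:Z * a%:Z - be'%:Z * b%:Z = t ->
            (alpha + beta <= al' + be')%N)
      & odd (alpha + beta) = p].

(* (a,b) is of case (p,q): parity of minimal alpha+beta for d is p and
   for -d is q (false = even, true = odd), d = gcd(a,b). *)
Definition case_ab (a b : nat) (p q : bool) : Prop :=
  minsum_parity a b (gcdn a b)%:Z p /\ minsum_parity a b (- (gcdn a b)%:Z) q.

Definition case1' a b := case_ab a b false false.
Definition case2' a b := case_ab a b false true.
Definition case3' a b := case_ab a b true false.

(* Main.v *)
Require Import Defs.
From mathcomp Require Import all_boot all_order all_algebra zify ring.
Import Order.TTheory GRing.Theory Num.Theory.
Set Implicit Arguments. Unset Strict Implicit.
Local Open Scope ring_scope.

Definition nxt (P : pred nat) (hP : forall N, exists i, (N < i)%N && P i) N :=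
  xchoose (hP N).
Lemma nxtP P hP N : (N < @nxt P hP N)%N && P (nxt hP N).
Proof. exact: (xchooseP (hP N)). Qed.
Fixpoint block (P : pred nat) (hP : forall N, exists i, (N < i)%N && P i) n N :=
  if n is n'.+1 then nxt hP N :: block hP n' (nxt hP N) else [::].
Lemma block_path P hP n N : path ltn N (@block P hP n N).
Proof. elim: n N => //= n IH N. by case/andP: (nxtP hP N) => -> _; rewrite IH. Qed.
Lemma block_size P hP n N : size (@block P hP n N) = n.
Proof. by elim: n N => //= n IH N; rewrite IH. Qed.
Lemma block_all P hP n N : all P (@block P hP n N).
Proof. elim: n N => //= n IH N. by case/andP: (nxtP hP N) => _ ->; rewrite IH. Qed.

Lemma mdeg_const deg r s : all (fun i => deg i == r) s -> mdeg deg s = (size s)%:Z * r.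
Proof.
rewrite /mdeg; elim: s => [|x s IH] /=; first by rewrite big_nil mul0r.
case/andP => /eqP hx /IH hs.
by rewrite big_cons hs hx intS mulrDl mul1r.
Qed.
Lemma mdeg_cat deg s t : mdeg deg (s ++ t) = mdeg deg s + mdeg deg t.
Proof. by rewrite /mdeg big_cat. Qed.

Lemma sorted_cat_path (t u : seq nat) :
  sorted ltn t -> path ltn (last 0%N t) u -> sorted ltn (t ++ u).
Proof. case: t => [|x t] /=; first by move=> _; exact: path_sorted. by rewrite cat_path => -> ->. Qed.

Lemma path_gt N s y : path ltn N s -> y \in s -> (N < y)%N.
Proof. by move=> /(order_path_min ltn_trans) /allP; apply. Qed.
Lemma path_last N s : path ltn N s -> (N <= last N s)%N.
Proof. elim: s N => //= x s IH N /andP[h1 h2]. exact: leq_trans (ltnW h1) (IH _ h2). Qed.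
Lemma path_le_last N s y : path ltn N s -> y \in s -> (y <= last N s)%N.
Proof.
elim: s N => //= x s IH N /andP[h1 h2]; rewrite inE => /orP[/eqP ->|ys].
- exact: path_last.
- exact: IH.
Qed.
Lemma path_last_gt N s : path ltn N s -> s != [::] -> (N < last N s)%N.
Proof. case: s => //= x s /andP[h1 h2] _. exact: leq_trans h1 (path_last h2). Qed.

Lemma family_ex (G : nat -> seq nat) :
  (forall N, path ltn N (G N) /\ G N != [::]) ->
  exists f : nat -> seq nat, (forall n, exists N, f n = G N) /\
    (forall m n, m <> n -> f m <> f n /\ disjoint_supp (f m) (f n)).
Proof.
move=> hG.
pose fix bnd n := if n is n'.+1 then last (bnd n') (G (bnd n')) else 0%N.
have bS n : bnd n.+1 = last (bnd n) (G (bnd n)) by [].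
have bmono n : (bnd n < bnd n.+1)%N.
  by rewrite bS; case: (hG (bnd n)) => h1 h2; apply: path_last_gt.
have ble m n : (m < n)%N -> (bnd m.+1 <= bnd n)%N.
  elim: n => // n IH; rewrite ltnS leq_eqVlt => /orP[/eqP->//|/IH h].
  exact: leq_trans h (ltnW (bmono n)).
have key m n y y' : (m < n)%N -> y \in G (bnd m) -> y' \in G (bnd n) -> (y < y')%N.
  move=> mn hy hy'.
  have h1 : (y <= bnd m.+1)%N.
    by rewrite bS; case: (hG (bnd m)) => h _; apply: path_le_last hy.
  have h2 : (bnd n < y')%N by case: (hG (bnd n)) => h _; apply: path_gt hy'.
  exact: leq_ltn_trans (leq_trans h1 (ble _ _ mn)) h2.
have dis m n : (m < n)%N ->
    disjoint_supp (G (bnd m)) (G (bnd n)) /\ disjoint_supp (G (bnd n)) (G (bnd m)).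
  move=> mn; split; apply/allP => y hy; apply/negP => hy'.
  - by have := key _ _ _ _ mn hy hy'; rewrite ltnn.
  - by have := key _ _ _ _ mn hy' hy; rewrite ltnn.
have neq m n : disjoint_supp (G (bnd m)) (G (bnd n)) -> G (bnd m) <> G (bnd n).
  move=> hd he; have [_ ne] := hG (bnd m); move: hd ne; rewrite he.
  case: (G (bnd n)) => //= y s; rewrite /disjoint_supp /= => /andP[].
  by rewrite inE eqxx.
exists (fun n => G (bnd n)); split; first by move=> n; exists (bnd n).
move=> m n mn; have [lt|gt|eq] := ltngtP m n.
- by have [h1 _] := dis _ _ lt; split => //; apply: neq.
- have [h1 h2] := dis _ _ gt; split => //.
  by move=> e; apply: (neq n m h1); rewrite e.
- by [].
Qed.
Lemma solve_even (a b : nat) : (0 < a)%N -> (0 < b)%N ->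
  (case1' a b \/ case2' a b \/ case3' a b) ->
  forall m : int, exists z x : nat,
   [/\ z%:Z * a%:Z - x%:Z * b%:Z = m * (gcdn a b)%:Z, ~~ odd (z + x) & (0 < z)%N].
Proof.
move=> a0 b0 hc m.
have [p [q [npq h1 h2]]] : exists p q, [/\ ~~ (p && q),
   minsum_parity a b (gcdn a b)%:Z p & minsum_parity a b (- (gcdn a b)%:Z) q].
  by case: hc => [[h1 h2]|[[h1 h2]|[h1 h2]]];
    [exists false, false | exists false, true | exists true, false]; split.
case: h1 => al [be [e1 _ pp]]; case: h2 => al' [be' [e2 _ qq]].
move: e1 e2; set d := gcdn a b => e1 e2.
have d0 : (0 < d)%N by rewrite gcdn_gt0 a0.
set a' := (a %/ d)%N; set b' := (b %/ d)%N.
have ha : a = (a' * d)%N by rewrite divnK // dvdn_gcdl.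
have hb : b = (b' * d)%N by rewrite divnK // dvdn_gcdr.
have b'0 : (0 < b')%N by move: b0; rewrite hb muln_gt0 => /andP[].
have nbe : odd a' || odd b'.
  case oa: (odd a'); case ob: (odd b') => //=.
  have h2a : (2 * d %| a)%N by rewrite ha dvdn_pmul2r // dvdn2 oa.
  have h2b : (2 * d %| b)%N by rewrite hb dvdn_pmul2r // dvdn2 ob.
  have : (2 * d %| d)%N by rewrite /d dvdn_gcd h2a h2b.
  move/(dvdn_leq d0); lia.
have par : ~~ odd (a' + b') -> odd (al + be) = odd (al' + be').
  move=> ev.
  have [oa ob] : odd a' /\ odd b'.
    by move: nbe ev; rewrite oddD; case: (odd a'); case: (odd b').
  have E : ((al + al') * a' = (be + be') * b')%N.
    apply/eqP; rewrite -(eqn_pmul2r d0) -!mulnA -ha -hb; apply/eqP. lia.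
  have := congr1 odd E; rewrite !oddM oa ob !andbT !oddD.
  by move: (odd al) (odd al') (odd be) (odd be') => [] [] [] [].
have [z0 [x0 [h0 hpar]]] : exists z0 x0 : nat,
    z0%:Z * a%:Z - x0%:Z * b%:Z = m * d%:Z /\ (odd (z0 + x0) -> p || q).
  case: m => n.
  - exists (n * al)%N, (n * be)%N; split.
      by rewrite !PoszM -!mulrA -mulrBr e1.
    by rewrite -mulnDr oddM pp => /andP[_ ->].
  - exists (n.+1 * al')%N, (n.+1 * be')%N; split.
      by rewrite !PoszM -!mulrA -mulrBr e2 NegzE mulrN mulNr.
    by rewrite -mulnDr oddM qq => /andP[_ ->]; rewrite orbT.
have eqj : forall j : nat, (z0 + j * b' + 2 * b')%N%:Z * a%:Z
     - (x0 + j * a' + 2 * a')%N%:Z * b%:Z = m * d%:Z.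
  move=> j; move: h0; rewrite ha hb => h0. lia.
exists (z0 + odd (z0 + x0) * b' + 2 * b')%N, (x0 + odd (z0 + x0) * a' + 2 * a')%N.
split => //; last by lia.
have -> : (z0 + odd (z0 + x0) * b' + 2 * b' + (x0 + odd (z0 + x0) * a' + 2 * a')
   = (z0 + x0) + odd (z0 + x0) * (a' + b') + 2 * (a' + b'))%N by lia.
case o: (odd (z0 + x0)%N).
  have oS : odd (a' + b')%N.
    apply/negPn/negP => ev; have := par ev; rewrite pp qq => epq.
    by move: npq (hpar o); rewrite epq andbb orbb => /negbTE ->.
  move: (z0 + x0)%N (a' + b')%N o oS => w S o oS.
  by rewrite mul1n !oddD o oS.
move: (z0 + x0)%N (a' + b')%N o => w S o.
rewrite mul0n addn0 !oddD o; by case: (odd S).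
Qed.

Theorem proposition4p9 (a b : nat) (c : int) (k : natinf) (deg : nat -> int) :
  (0 < a)%N -> (0 < b)%N ->
  - (b%:Z) < c -> c < a%:Z ->
  gcdn (gcdn a b) `|c|%N = 1%N ->
  gcdn a b <> 1%N -> gcdn a `|c|%N <> 1%N -> gcdn b `|c|%N <> 1%N ->
  natinf_ge k (gcdn a b).-1 ->
  (case1' a b \/ case2' a b \/ case3' a b) ->
  realizes_grading deg [:: - (b%:Z); c; a%:Z] [:: None; k; None] ->
  d_central (gcdn a b) deg.
Proof.
move=> a0 b0 cl cu g1 gab gac gbc hk hc [_ [_ [_ hcard]]].
have hB := hcard 0%N isT; have hC := hcard 1%N isT; have hA := hcard 2%N isT.
simpl in hB, hC, hA.
have iB : forall N, exists i, (N < i)%N && (deg i == - b%:Z).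
  by move=> N; case: (hB N.+1) => x [h1 h2]; exists x; rewrite h1 h2.
have iA : forall N, exists i, (N < i)%N && (deg i == a%:Z).
  by move=> N; case: (hA N.+1) => x [h1 h2]; exists x; rewrite h1 h2.
have d0 : (0 < gcdn a b)%N by rewrite gcdn_gt0 a0.
split.
- move=> r.
  have [u [v huv]] := Bezoutz c (gcdn a b)%:Z.
  have g1' : gcdz c (gcdn a b)%:Z = 1 by rewrite /gcdz absz_nat gcdnC g1.
  rewrite g1' in huv.
  set D := (gcdn a b)%:Z.
  have D0 : 0 < D by rewrite /D ltz_nat.
  set y := ((r * u) %% D)%Z; set q := ((r * u) %/ D)%Z.
  have y0 : 0 <= y by apply: modz_ge0; rewrite gt_eqF.
  have yD : y < D by apply: ltz_pmod.
  have hry : r - c * y = (r * v + c * q) * D.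
    have hy : y = r * u - q * D by rewrite /y /q {2}(divz_eq (r * u) D); ring.
    have hr : r = r * (u * c + v * D) by rewrite huv mulr1.
    rewrite {1}hr hy; ring.
  have [z [x [eq _ _]]] := solve_even a0 b0 hc (r * v + c * q).
  set ny := `|y|%N.
  have hny : ny%:Z = y by rewrite /ny gez0_abs.
  have nyd : (ny <= (gcdn a b).-1)%N.
    have : ny%:Z < D by rewrite hny.
    rewrite /D ltz_nat; lia.
  have [t [ts tsz tall]] :
      exists t, [/\ sorted ltn t, size t = ny & all (fun i => deg i == c) t].
    clear hcard; case: k hk hC => [n|] /= hk hC.
    - case: hC => s [us ss hsP].
      exists (sort leq (take ny s)); split.
      + by rewrite ltn_sorted_uniq_leq sort_uniq take_uniq // sort_sorted //; apply: leq_total.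
      + by rewrite size_sort size_takel // ss; apply: leq_trans nyd hk.
      + by rewrite all_sort; apply/allP => i /mem_take hi; rewrite hsP.
    - have iC : forall N, exists i, (N < i)%N && (deg i == c).
        by move=> N; case: (hC N.+1) => x' [h1 h2]; exists x'; rewrite h1 h2.
      exists (block iC ny 0); split.
      + exact: path_sorted (block_path _ _ _).
      + exact: block_size.
      + exact: block_all.
  set sB := block iB x (last 0%N t).
  set sA := block iA z (last (last 0%N t) sB).
  exists (t ++ (sB ++ sA)); split.
    apply: sorted_cat_path => //; rewrite cat_path !block_path.
    done.
  rewrite !mdeg_cat (mdeg_const tall) (mdeg_const (block_all _ _ _))
     (mdeg_const (block_all _ _ _)) tsz !block_size hny.
  move: eq hry; rewrite -/D => eq hry.
  lia.
- move=> h hd.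
  have [z [x [eq ev zp]]] := solve_even a0 b0 hc (h %/ (gcdn a b)%:Z)%Z.
  rewrite divzK // in eq.
  pose G N := let s := block iB x N in s ++ block iA z (last N s).
  have hG : forall N, path ltn N (G N) /\ G N != [::].
    move=> N; rewrite /G cat_path !block_path; split => //.
    by rewrite -size_eq0 size_cat !block_size; lia.
  have [f [fG fd]] := family_ex hG.
  exists f; split => // n.
  have [N ->] := fG n.
  split.
  + exact: path_sorted (proj1 (hG N)).
  + by rewrite /G size_cat !block_size addnC.
  + rewrite /G mdeg_cat (mdeg_const (block_all _ _ _))
     (mdeg_const (block_all _ _ _)) !block_size.
    lia.
Qed.
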